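(* Let $p\ge1$, $\sigma^2>0$, $\boldsymbol\beta\in\mathbb{R}^p$ not identically zero with $\beta_1\le\cdots\le\beta_p$, $\delta_1^2,\dots,\delta_p^2>0$, $\sum_{i=1}^p\beta_i/\delta_i^2\ge0$, and $\Sigma=\sigma^2\boldsymbol\beta\boldsymbol\beta^\top+\mathrm{diag}(\delta_1^2,\dots,\delta_p^2)$. Let $w=w^L$ be the long-only minimum variance portfolio (the minimizer of $w^\top\Sigma w$ subject to $w^\top\mathbf{1}_p=1$, $w\ge0$), $K=\{i:w_i>0\}$, $k=|K|$, $P=\{1,\dots,p\}$, and let $w^{LS}=\Sigma^{-1}\mathbf{1}_p/(\mathbf{1}_p^\top\Sigma^{-1}\mathbf{1}_p)$ be the long-short minimum variance portfolio. Then either $K=P$ and $w^{LS}=w^L$, or else $K\ne P$, $\sum_{j=1}^k\beta_j/\delta_j^2>0$, and for every $i$, $$w_i>0\iff \beta_i<\frac{\frac{1}{\sigma^2}+\sum_{j=1}^k\frac{\beta_j^2}{\delta_j^2}}{\sum_{j=1}^k\frac{\beta_j}{\delta_j^2}}.$$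
   Context: $\mathbf{1}_p$ is the all-ones vector in $\mathbb{R}^p$. *)

(* Defs.v *)
From mathcomp Require Import all_boot all_order all_algebra.
From mathcomp Require Import reals.
Set Implicit Arguments. Unset Strict Implicit. Unset Printing Implicit Defensive.
Import Order.TTheory GRing.Theory Num.Theory.
Local Open Scope ring_scope.

Section Defs.
Variable R : realType.

Definition ones (p : nat) : 'cV[R]_p := const_mx 1.

Definition Sigma (p : nat) (sigma2 : R) (beta delta2 : 'cV[R]_p) : 'M[R]_p :=
  sigma2 *: (beta *m beta^T) + diag_mx (delta2^T).

Definition qform (p : nat) (A : 'M[R]_p) (w : 'cV[R]_p) : R := (w^T *m A *m w) 0 0.

Definition long_only_feasible (p : nat) (w : 'cV[R]_p) : Prop :=
  (forall i, 0 <= w i 0) /\ (w^T *m ones p) 0 0 = 1.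

Definition is_long_only_mvp (p : nat) (A : 'M[R]_p) (w : 'cV[R]_p) : Prop :=
  long_only_feasible w /\ forall v, long_only_feasible v -> qform A w <= qform A v.

Definition w_LS (p : nat) (A : 'M[R]_p) : 'cV[R]_p :=
  (((ones p)^T *m invmx A *m ones p) 0 0)^-1 *: (invmx A *m ones p).
Definition supp (p : nat) (w : 'cV[R]_p) : {set 'I_p} := [set i | 0 < w i 0].
End Defs.

(* Main.v *)
Require Import Defs.
From mathcomp Require Import all_boot all_order all_algebra.
From mathcomp Require Import reals ring lra.
Import Order.TTheory GRing.Theory Num.Theory.
Local Open Scope ring_scope.
Lemma card_lt (p m : nat) : (m <= p)%N -> #|[set j : 'I_p | (j < m)%N]| = m.
Proof.
move=> hm; rewrite -sum1_card (eq_bigl (fun j : 'I_p => (j < m)%N)); last by move=> j; rewrite inE.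
by rewrite -(big_ord_widen p (fun _ => 1%N) hm) sum1_card card_ord.
Qed.

Section S.
Variable R : realType.
Variable p : nat.
Variables (s2 : R) (beta delta2 : 'cV[R]_p).

Lemma m11 (M : 'M[R]_(1,p)) (N : 'cV[R]_p) : (M *m N) 0 0 = \sum_i M 0 i * N i 0.
Proof. by rewrite mxE. Qed.

Lemma qformE (x : 'cV[R]_p) : qform (Sigma s2 beta delta2) x =
  s2 * (\sum_i beta i 0 * x i 0) ^+ 2 + \sum_i delta2 i 0 * x i 0 ^+ 2.
Proof.
rewrite /qform /Sigma mulmxDr mulmxDl mxE -scalemxAr -scalemxAl mxE.
rewrite [x^T *m (beta *m _)]mulmxA -[_ *m beta^T *m x]mulmxA mxE big_ord1 mul_mx_diag !mxE.
congr (_ * _ + _).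
  rewrite expr2; congr (_ * _); apply: eq_bigr => i _; rewrite !mxE (_ : ord0 = 0) //; first exact: mulrC.
apply: eq_bigr => i _; rewrite !mxE; ring.
Qed.

Lemma sum_ones (x : 'cV[R]_p) : (x^T *m ones R p) 0 0 = \sum_i x i 0.
Proof. by rewrite mxE; apply: eq_bigr => i _; rewrite !mxE mulr1. Qed.

Lemma sum_dlt (F : 'I_p -> R) j : \sum_i F i * (i == j)%:R = F j.
Proof.
rewrite (bigD1 j) //= eqxx mulr1 big1 ?addr0 // => i /negbTE ->; by rewrite mulr0.
Qed.

Lemma sum_dlt1 j : \sum_(i < p) (i == j)%:R = 1 :> R.
Proof. rewrite (bigD1 j) //= eqxx big1 ?addr0 // => i /negbTE ->; done. Qed.

Variable w : 'cV[R]_p.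
Hypothesis hs2 : 0 < s2.
Hypothesis hd : forall i, 0 < delta2 i 0.
Hypothesis hw : is_long_only_mvp (Sigma s2 beta delta2) w.

Definition S := \sum_i beta i 0 * w i 0.
Definition Q := \sum_i delta2 i 0 * w i 0 ^+ 2.
Definition c := s2 * S ^+ 2 + Q.
Definition g i := s2 * beta i 0 * S + delta2 i 0 * w i 0.

Lemma grad j : c <= g j.
Proof.
rewrite leNgt; apply/negP => hlt.
set a := g j - c.
have ha : a < 0 by rewrite /a subr_lt0.
set B := s2 * (S - beta j 0) ^+ 2 + Q - 2 * delta2 j 0 * w j 0 + delta2 j 0.
set t := - a / (`|B| - a).
have hBa : 0 < `|B| - a by have := normr_ge0 B; lra.
have ht0 : 0 < t by rewrite /t divr_gt0 // oppr_gt0.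
have htB : t * (`|B| - a) = - a by rewrite /t mulfVK // gt_eqF.
have ht1 : t <= 1 by rewrite /t ler_pdivrMr // mul1r; have := normr_ge0 B; lra.
pose v := (1 - t) *: w + t *: delta_mx j (0 : 'I_1).
have hvi i : v i 0 = (1 - t) * w i 0 + t * (i == j)%:R.
  by rewrite !mxE eqxx andbT.
have hv : long_only_feasible v.
  split.
    move=> i; rewrite hvi; apply: addr_ge0; apply: mulr_ge0; [lra | exact: hw.1.1 | lra | by case: (i == j)].
  rewrite mxE (eq_bigr (fun i => v i 0)); last by move=> i _; rewrite !mxE mulr1.
  rewrite (eq_bigr _ (fun i _ => hvi i)) big_split /= -!mulr_sumr  sum_dlt1 mulr1.
  have := hw.1.2; rewrite mxE (eq_bigr (fun i => w i 0)); last by move=> i _; rewrite !mxE mulr1.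
  move=> ->; lra.
have := hw.2 v hv; rewrite !qformE.
have -> : \sum_i beta i 0 * v i 0 = (1 - t) * S + t * beta j 0.
  rewrite (eq_bigr _ (fun i _ => congr1 (fun z => beta i 0 * z) (hvi i))).
  under eq_bigr => i _ do rewrite mulrDr mulrCA (mulrCA _ t).
  by rewrite big_split /= -!mulr_sumr sum_dlt.
have -> : \sum_i delta2 i 0 * v i 0 ^+ 2 =
    (1 - t) ^+ 2 * Q + 2 * t * (1 - t) * (delta2 j 0 * w j 0) + t ^+ 2 * delta2 j 0.
  rewrite (eq_bigr _ (fun i _ => congr1 (fun z => delta2 i 0 * z ^+ 2) (hvi i))).
  rewrite (bigD1 j) //= eqxx /Q [in RHS](bigD1 j) //= mulrDr.
  rewrite (eq_bigr (fun i => (1 - t) ^+ 2 * (delta2 i 0 * w i 0 ^+ 2))); last first.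
    by move=> i hi; rewrite (negbTE hi) mulr0 addr0; ring.
  rewrite -mulr_sumr; ring.
rewrite -/Q.
have hB : B <= `|B| := ler_norm B.
have key : s2 * ((1 - t) * S + t * beta j 0) ^+ 2 +
   ((1 - t) ^+ 2 * Q + 2 * t * (1 - t) * (delta2 j 0 * w j 0) + t ^+ 2 * delta2 j 0)
   = c + t * (2 * a + t * B).
  rewrite /a /c /g /B; ring.
rewrite key -/c.
have : t * B <= t * `|B| by rewrite ler_pM2l.
nra.
Qed.

Lemma w_ge0 i : 0 <= w i 0. Proof. exact: hw.1.1. Qed.

Lemma sum_w : \sum_i w i 0 = 1.
Proof.
have := hw.1.2; rewrite mxE (eq_bigr (fun i => w i 0)) //.
by move=> i _; rewrite !mxE mulr1.
Qed.

Lemma sum_wg : \sum_i w i 0 * g i = c.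
Proof.
rewrite /c /Q /g /S.
under eq_bigr => i _ do rewrite mulrDr.
rewrite big_split /= expr2 mulrA mulr_sumr; congr (_ + _).
  by apply: eq_bigr => i _; ring.
by apply: eq_bigr => i _; ring.
Qed.

Lemma kkt i : 0 < w i 0 -> g i = c.
Proof.
move=> hi.
have h0 : \sum_i w i 0 * (g i - c) = 0.
  under eq_bigr => k _ do rewrite mulrBr.
  by rewrite sumrB sum_wg -mulr_suml sum_w mul1r subrr.
have hge : forall k : 'I_p, true -> 0 <= w k 0 * (g k - c).
  by move=> k _; apply: mulr_ge0; [exact: w_ge0 | rewrite subr_ge0; exact: grad].
have := @psumr_eq0P _ _ _ _ hge h0 i isT.
by move/eqP; rewrite mulf_eq0 subr_eq0 gt_eqF //= => /eqP.
Qed.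

Lemma w_eq0 i : ~~ (0 < w i 0) -> w i 0 = 0.
Proof. by rewrite -leNgt => h; apply/le_anti; rewrite h w_ge0. Qed.

Lemma c_pos : 0 < c.
Proof.
case: (pickP (fun i => 0 < w i 0)) => [i hi | h]; last first.
  have h0 : \sum_i w i 0 = 0 by apply: big1 => i _; apply: w_eq0; rewrite h.
  by move: sum_w; rewrite h0 => /eqP; rewrite eq_sym oner_eq0.
rewrite /c /Q (bigD1 i) //=.
have h1 : 0 <= \sum_(k < p | k != i) delta2 k 0 * w k 0 ^+ 2.
  by apply: sumr_ge0 => k _; apply: mulr_ge0; [exact: ltW | exact: sqr_ge0].
have h2 : 0 < delta2 i 0 * w i 0 ^+ 2 by apply: mulr_gt0; rewrite ?exprn_gt0.
have h3 : 0 <= s2 * S ^+ 2 by apply: mulr_ge0; [exact: ltW | exact: sqr_ge0].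
lra.
Qed.

Definition Ak := \sum_(i < p | 0 < w i 0) beta i 0 / delta2 i 0.
Definition Bk := \sum_(i < p | 0 < w i 0) beta i 0 ^+ 2 / delta2 i 0.

Lemma Bk_ge0 : 0 <= Bk.
Proof. by apply: sumr_ge0 => i _; apply: divr_ge0; [exact: sqr_ge0 | exact: ltW]. Qed.

Lemma key : S * (1 + s2 * Bk) = c * Ak.
Proof.
have hS : S = c * Ak - s2 * S * Bk.
  have hSK : S = \sum_(i < p | 0 < w i 0) beta i 0 * w i 0.
    rewrite /S (bigID (fun i => 0 < w i 0)) /= [X in _ + X]big1 ?addr0 //.
    by move=> i hi; rewrite w_eq0 ?mulr0.
  rewrite {1}hSK /Ak /Bk [c * _]mulr_sumr [s2 * S * _]mulr_sumr -sumrB; apply: eq_bigr => i hi.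
  have := @kkt i hi; rewrite /g => hg.
  have hdi : delta2 i 0 != 0 by rewrite gt_eqF.
  have -> : w i 0 = (c - s2 * beta i 0 * S) / delta2 i 0.
    by rewrite -hg; field.
  by field.
rewrite mulrDr mulr1 {1}hS; ring.
Qed.

Lemma Sigma_w i : (Sigma s2 beta delta2 *m w) i 0 = g i.
Proof.
rewrite /Sigma mulmxDl -scalemxAl -mulmxA mul_diag_mx !mxE big_ord1 /g /S !mxE.
rewrite mulrA; congr (_ * _ + _).
by apply: eq_bigr => k _; rewrite !mxE.
Qed.

Lemma Sigma_unit : Sigma s2 beta delta2 \in unitmx.
Proof.
rewrite -row_free_unit -kermx_eq0; apply/eqP/row_matrixP => i; rewrite row0.
set v := row i _.
have hv : v *m Sigma s2 beta delta2 = 0 by rewrite /v -row_mul mulmx_ker row0.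
have hq : qform (Sigma s2 beta delta2) v^T = 0 by rewrite /qform trmxK hv mul0mx mxE.
move: hq; rewrite qformE => hq.
have h1 : 0 <= \sum_k delta2 k 0 * v^T k 0 ^+ 2.
  by apply: sumr_ge0 => k _; apply: mulr_ge0; [exact: ltW | exact: sqr_ge0].
have h3 : 0 <= s2 * (\sum_k beta k 0 * v^T k 0) ^+ 2.
  by apply: mulr_ge0; [exact: ltW | exact: sqr_ge0].
have h0 : \sum_k delta2 k 0 * v^T k 0 ^+ 2 = 0 by lra.
have hge : forall k : 'I_p, true -> 0 <= delta2 k 0 * v^T k 0 ^+ 2.
  by move=> k _; apply: mulr_ge0; [exact: ltW | exact: sqr_ge0].
apply/rowP => k; rewrite mxE.
have := @psumr_eq0P _ _ _ _ hge h0 k isT.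
move/eqP; rewrite mulf_eq0 gt_eqF //= sqrf_eq0 mxE /v mxE => /eqP ->; by rewrite mxE.
Qed.

Hypothesis hmono : forall i j : 'I_p, (i <= j)%N -> beta i 0 <= beta j 0.
Hypothesis hsum : 0 <= \sum_(i < p) beta i 0 / delta2 i 0.

Lemma main :
  (supp w = [set: 'I_p] /\
     w_LS (Sigma s2 beta delta2) = w)
  \/
  (supp w != [set: 'I_p] /\
   0 < \sum_(j < p | (j < #|supp w|)%N) beta j 0 / delta2 j 0 /\
   forall i : 'I_p,
     0 < w i 0 <->
     beta i 0 <
       (s2^-1 + \sum_(j < p | (j < #|supp w|)%N)
                      beta j 0 ^+ 2 / delta2 j 0)
       / (\sum_(j < p | (j < #|supp w|)%N) beta j 0 / delta2 j 0)).
Proof.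
have hc := c_pos.
case: (boolP (supp w == [set: 'I_p])) => hK.
  left; split; first exact/eqP.
  have hall i : 0 < w i 0 by have := eqP hK; move/setP/(_ i); rewrite !inE.
  have hSw : Sigma s2 beta delta2 *m w = c *: ones R p.
    by apply/matrixP => i j; rewrite (ord1 j) Sigma_w kkt // !mxE mulr1.
  have hinv : invmx (Sigma s2 beta delta2) *m ones R p = c^-1 *: w.
    have : w = invmx (Sigma s2 beta delta2) *m (Sigma s2 beta delta2 *m w).
      by rewrite mulmxA mulVmx ?mul1mx // Sigma_unit.
    rewrite hSw -scalemxAr => hw'.
    by rewrite [in RHS]hw' scalerA mulVf ?scale1r // gt_eqF.
  rewrite /w_LS -mulmxA hinv -scalemxAr mxE.
  have -> : ((ones R p)^T *m w) 0 0 = 1.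
    by rewrite -sum_w mxE; apply: eq_bigr => i _; rewrite !mxE mul1r.
  by rewrite mulr1 invrK scalerA mulfV ?scale1r // gt_eqF.
right; split => //.
have [i0 hi0] : exists i, ~~ (0 < w i 0).
  case: (pickP (fun i => ~~ (0 < w i 0))) => [i hi | h]; first by exists i.
  move: hK; rewrite eqEsubset subsetT /= => /negP; case.
  by apply/subsetP => i _; rewrite inE; move: (h i) => /negbFE.
have hS : 0 < S.
  rewrite ltNge; apply/negP => hS0.
  have hneg i : ~~ (0 < w i 0) -> beta i 0 < 0 /\ S < 0.
    move=> hi; have := grad i; rewrite /g w_eq0 // mulr0 addr0 => hg.
    have hbs : 0 < beta i 0 * S.
      by rewrite -(pmulr_rgt0 _ hs2) mulrA; exact: lt_le_trans hc hg.
    have hSn : S < 0.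
      rewrite lt_neqAle hS0 andbT; apply/eqP => e; move: hbs; by rewrite e mulr0 ltxx.
    split => //; nra.
  have hS' := (hneg i0 hi0).2.
  have h1 : 0 < 1 + s2 * Bk by have := mulr_ge0 (ltW hs2) Bk_ge0; lra.
  have hA : Ak < 0.
    have h2 : S * (1 + s2 * Bk) < 0 by nra.
    move: h2; rewrite key => h2; nra.
  move: hsum; rewrite (bigID (fun i => 0 < w i 0)) /= -/Ak.
  have : \sum_(i < p | ~~ (0 < w i 0)) beta i 0 / delta2 i 0 <= 0.
    apply: sumr_le0 => i hi.
    have hb : 0 < - beta i 0 by rewrite oppr_gt0; exact: (hneg i hi).1.
    have := divr_gt0 hb (hd i); rewrite mulNr; lra.
  lra.
have hs2S : 0 < s2 * S by apply: mulr_gt0.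
have hiff i : (0 < w i 0) = (beta i 0 < c / (s2 * S)).
  rewrite ltr_pdivlMr //.
  case: (boolP (0 < w i 0)) => hi.
    have := @kkt i hi; rewrite /g => h; have := mulr_gt0 (hd i) hi.
    by move=> h1; symmetry; lra.
  symmetry; apply/negbTE; rewrite -leNgt.
  have := grad i; rewrite /g w_eq0 // mulr0 addr0; lra.
have hdown (i j : 'I_p) : (j <= i)%N -> 0 < w i 0 -> 0 < w j 0.
  rewrite !hiff => hji; exact: le_lt_trans (hmono _ _ hji).
have hk (i : 'I_p) : (0 < w i 0) = (i < #|supp w|)%N.
  case: (boolP (0 < w i 0)) => hi.
    symmetry.
    have hsub : [set j : 'I_p | (j < i.+1)%N] \subset supp w.
      by apply/subsetP => j; rewrite !inE ltnS => hj; exact: hdown hj hi.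
    by have := subset_leq_card hsub; rewrite card_lt.
  symmetry; apply/negbTE; rewrite -leqNgt.
  have hsub : supp w \subset [set j : 'I_p | (j < i)%N].
    apply/subsetP => j; rewrite !inE => hj; rewrite ltnNge; apply/negP => hij.
    by move: hi; rewrite (hdown _ _ hij hj).
  by have := subset_leq_card hsub; rewrite card_lt // ltnW.
have hA : Ak = \sum_(j < p | (j < #|supp w|)%N) beta j 0 / delta2 j 0.
  by apply: eq_bigl => j; rewrite hk.
have hB : Bk = \sum_(j < p | (j < #|supp w|)%N) beta j 0 ^+ 2 / delta2 j 0.
  by apply: eq_bigl => j; rewrite hk.
rewrite -hA -hB.
have h1 : 0 < 1 + s2 * Bk by have := mulr_ge0 (ltW hs2) Bk_ge0; lra.
have hApos : 0 < Ak.
  have h2 : 0 < S * (1 + s2 * Bk) by nra.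
  move: h2; rewrite key => h2; nra.
have ht : c / (s2 * S) = (s2^-1 + Bk) / Ak.
  apply/eqP; rewrite eqr_div; [|by rewrite gt_eqF|by rewrite gt_eqF].
  rewrite -key; apply/eqP; field; by rewrite gt_eqF.
by split => // i; rewrite -ht -hiff.
Qed.
End S.

Theorem corollary2 (R : realType) (p : nat) (sigma2 : R)
    (beta delta2 w : 'cV[R]_p) :
  (0 < p)%N ->
  0 < sigma2 ->
  beta != 0 ->
  (forall i j : 'I_p, (i <= j)%N -> beta i 0 <= beta j 0) ->
  (forall i : 'I_p, 0 < delta2 i 0) ->
  0 <= \sum_(i < p) beta i 0 / delta2 i 0 ->
  is_long_only_mvp (Sigma sigma2 beta delta2) w ->
  (supp w = [set: 'I_p] /\
     w_LS (Sigma sigma2 beta delta2) = w)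
  \/
  (supp w != [set: 'I_p] /\
   0 < \sum_(j < p | (j < #|supp w|)%N) beta j 0 / delta2 j 0 /\
   forall i : 'I_p,
     0 < w i 0 <->
     beta i 0 <
       (sigma2^-1 + \sum_(j < p | (j < #|supp w|)%N)
                      beta j 0 ^+ 2 / delta2 j 0)
       / (\sum_(j < p | (j < #|supp w|)%N) beta j 0 / delta2 j 0)).
Proof.
move=> _ hs2 _ hm hd hsum hw.
exact: (@main R p sigma2 beta delta2 w hs2 hd hw hm hsum).
Qed.
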